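(* Let $s,t_0\ge 2$ be integers. Then for all integers $t\ge t_0$, $$g_{s,t}\le\left(t - t_0 + g_{s,t_0}^{1/(1-s)}\right)^{1-s}.$$ In particular, if $g_{s,t_0} < (t_0-1)^{1-s}$, then $g_{s,t} < (t-1)^{1-s}$ for all $t\ge t_0$.
   Context: For a graph $G$, $k_t(G)$ is the number of cliques on $t$ vertices in $G$ and $\overline{G}$ is the complement. Let $k'_{s,t}(n) = \min\{k_s(\overline{G}) : |V(G)| = n,\ k_t(G) = 0\}$, the minimum number of independent sets of size $s$ in an $n$-vertex graph with no clique of size $t$, and $g_{s,t} = \lim_{n\to\infty}k'_{s,t}(n)/\binom{n}{s}$ (this limit exists and is positive for $s,t\ge 2$). *)

(* Defs.v *)
From HB Require Import structures.
From mathcomp Require Import all_boot all_order all_algebra.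
From mathcomp Require Import all_classical all_reals all_analysis.
Set Implicit Arguments. Unset Strict Implicit. Unset Printing Implicit Defensive.
Import Order.TTheory GRing.Theory Num.Theory.
Import numFieldNormedType.Exports.
Local Open Scope ring_scope.

(* A simple graph on vertex set 'I_n is given by its edge set
   E : {set {set 'I_n}}; x,y (x != y) are adjacent iff [set x; y] \in E.
   (Members of E that are not 2-subsets are irrelevant.) *)

Definition is_clique n (E : {set {set 'I_n}}) (S : {set 'I_n}) : bool :=
  [forall x in S, forall y in S, (x != y) ==> ([set x; y] \in E)].

Definition is_indep n (E : {set {set 'I_n}}) (S : {set 'I_n}) : bool :=
  [forall x in S, forall y in S, (x != y) ==> ([set x; y] \notin E)].

Definition kclique n (E : {set {set 'I_n}}) (t : nat) : nat :=
  #|[set S : {set 'I_n} | (#|S| == t) && is_clique E S]|.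

Definition kindep n (E : {set {set 'I_n}}) (s : nat) : nat :=
  #|[set S : {set 'I_n} | (#|S| == s) && is_indep E S]|.

(* k'_{s,t}(n): min of k_s(complement G) over n-vertex G with k_t(G) = 0.
   The default 'C(n,s) is an upper bound for every k_s, and for t >= 2 the
   empty graph is admissible, so this is the true minimum. *)
Definition kprime (s t n : nat) : nat :=
  \big[minn/'C(n, s)]_(E : {set {set 'I_n}} | kclique E t == 0) kindep E s.

Local Open Scope classical_set_scope.
Definition gst (R : realType) (s t : nat) : R :=
  limn (fun n : nat => (kprime s t n)%:R / ('C(n, s))%:R : R).

(* Main.v *)
Require Import Defs.
From HB Require Import structures.
From mathcomp Require Import all_boot all_order all_algebra.
From mathcomp Require Import all_classical all_reals all_analysis.
Import Order.TTheory GRing.Theory Num.Theory.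
Local Open Scope ring_scope.
From mathcomp Require Import zify ring lra.

Module M0.
Set Implicit Arguments. Unset Strict Implicit. Unset Printing Implicit Defensive.
Local Open Scope nat_scope.

Lemma kindep_le_C n (E : {set {set 'I_n}}) s : kindep E s <= 'C(n, s).
Proof.
rewrite /kindep -[n in 'C(n, _)]card_ord -card_draws.
by apply: subset_leq_card; apply/fintype.subsetP => S; rewrite !inE => /andP[].
Qed.

Lemma kprime_le_C s t n : kprime s t n <= 'C(n, s).
Proof.
rewrite /kprime; elim/big_ind: _ => //.
  by move=> x y hx hy; rewrite geq_min hx.
move=> E _; exact: kindep_le_C.
Qed.

Lemma kprime_le s t n (E : {set {set 'I_n}}) :
  kclique E t = 0 -> kprime s t n <= kindep E s.
Proof.
move=> hE; rewrite /kprime -minEnat.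
have := @bigmin_le_cond _ nat _ ('C(n, s)) E (fun E => kclique E t == 0) (fun E => kindep E s).
rewrite hE eqxx => /(_ isT). exact.
Qed.

Lemma kclique0 n (E : {set {set 'I_n}}) t :
  kclique E t = 0 -> forall S : {set 'I_n}, #|S| = t -> ~~ is_clique E S.
Proof.
move=> h S hS; apply/negP => cS.
have : 0 < kclique E t by apply/card_gt0P; exists S; rewrite inE hS eqxx cS.
by rewrite h.
Qed.

Lemma kprime_exists s t n : 2 <= t ->
  exists E : {set {set 'I_n}}, kclique E t = 0 /\ kprime s t n = kindep E s.
Proof.
move=> t2; rewrite /kprime; elim/big_ind: _.
- exists finset.set0; split.
  + apply/eqP; rewrite /kclique cards_eq0; apply/eqP; apply/finset.setP => S; rewrite !inE.
    apply/negbTE/negP => /andP[/eqP hS cS].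
    have : 1 < #|S| by rewrite hS.
    case/card_gt1P => x [y [hx hy hxy]].
    by move/forall_inP/(_ x hx)/forall_inP/(_ y hy): cS; rewrite hxy inE.
  + rewrite /kindep -[n in 'C(n, _)]card_ord -card_draws; apply: eq_card => S; rewrite !inE.
    have -> : is_indep finset.set0 S.
      by apply/forall_inP => x _; apply/forall_inP => y _; rewrite inE implybT.
    by rewrite andbT.
- move=> x y [E1 [h1 ->]] [E2 [h2 ->]].
  case: (leqP (kindep E1 s) (kindep E2 s)) => h; [exists E1 | exists E2]; by split.
- by move=> E /eqP hE; exists E.
Qed.

Lemma clique_sub n (E : {set {set 'I_n}}) (S T : {set 'I_n}) :
  T \subset S -> is_clique E S -> is_clique E T.
Proof.
move=> /fintype.subsetP sub cS; apply/forall_inP => x hx; apply/forall_inP => y hy.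
by move/forall_inP/(_ x (sub x hx))/forall_inP/(_ y (sub y hy)): cS.
Qed.

Lemma has_sub (T : finType) k (S : {set T}) : k <= #|S| ->
  exists U : {set T}, U \subset S /\ #|U| = k.
Proof.
move: {2}#|S| (erefl #|S|) => m; elim: m S => [|m IH] S hS hk.
  by exists finset.set0; split; [exact: finset.sub0set | rewrite cards0; lia].
case: (ltngtP k m.+1) => hkm.
- have : 0 < #|S| by rewrite hS.
  case/card_gt0P => x hx.
  have hS' : #|S :\ x| = m by move: hS; rewrite (cardsD1 x) hx add1n => -[].
  have hk' : k <= #|S :\ x| by rewrite hS'; rewrite ltnS in hkm.
  have [U [hU hUk]] := IH _ hS' hk'.
  exists U; split => //; exact: (fintype.subset_trans hU (subsetDl S [set x])).
- by move: hk; rewrite hS leqNgt hkm.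
- by exists S; split; [exact: subxx | rewrite hS hkm].
Qed.

Definition pull n m (f : 'I_n -> 'I_m) (E : {set {set 'I_m}}) : {set {set 'I_n}} :=
  [set S : {set 'I_n} | f @: S \in E].

Lemma imset_pair (aT rT : finType) (f : aT -> rT) x y :
  f @: [set x; y] = [set f x; f y].
Proof. by rewrite imsetU1 imset_set1. Qed.

Lemma pull_clique n m (f : 'I_n -> 'I_m) E S :
  is_clique (pull f E) S -> is_clique E (f @: S).
Proof.
move=> cS; apply/forall_inP => _ /imsetP[x hx ->]; apply/forall_inP => _ /imsetP[y hy ->].
apply/implyP => hne.
have hxy : x != y by apply: contra hne => /eqP ->.
by move/forall_inP/(_ x hx)/forall_inP/(_ y hy): cS; rewrite hxy /= inE imset_pair.
Qed.

Lemma pull_indep n m (f : 'I_n -> 'I_m) E S :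
  is_indep (pull f E) S -> is_indep E (f @: S).
Proof.
move=> cS; apply/forall_inP => _ /imsetP[x hx ->]; apply/forall_inP => _ /imsetP[y hy ->].
apply/implyP => hne.
have hxy : x != y by apply: contra hne => /eqP ->.
by move/forall_inP/(_ x hx)/forall_inP/(_ y hy): cS; rewrite hxy /= inE imset_pair.
Qed.

Lemma pull_free n m (f : 'I_n -> 'I_m) E t : injective f ->
  kclique E t = 0 -> kclique (pull f E) t = 0.
Proof.
move=> finj h; apply/eqP; rewrite /kclique cards_eq0; apply/eqP; apply/finset.setP => S; rewrite !inE.
apply/negbTE/negP => /andP[/eqP hS cS].
have := kclique0 h (S := f @: S); rewrite card_imset // hS => /(_ erefl).
by rewrite (pull_clique cS).
Qed.

Lemma pull_lift_count n (v : 'I_n.+1) E s :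
  kindep (pull (lift v) E) s <=
  #|[set S : {set 'I_n.+1} | (#|S| == s) && is_indep E S && (v \notin S)]|.
Proof.
rewrite /kindep -(card_imset _ (imset_inj (@lift_inj _ v))).
apply: subset_leq_card; apply/fintype.subsetP => _ /imsetP[S hS ->].
move: hS; rewrite !inE => /andP[/eqP hs hi].
rewrite card_imset //=; last exact: lift_inj.
rewrite hs eqxx (pull_indep hi) /=.
apply/imsetP => -[x _ hx].
by move: (neq_lift v x); rewrite -hx eqxx.
Qed.

Lemma kprime_avg s t n : 2 <= t ->
  n.+1 * kprime s t n <= (n.+1 - s) * kprime s t n.+1.
Proof.
move=> t2; have [E [hE ->]] := kprime_exists s n.+1 t2.
set I := [set S : {set 'I_n.+1} | (#|S| == s) && is_indep E S].
have h1 : forall v : 'I_n.+1, kprime s t n <= #|[set S in I | v \notin S]|.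
  move=> v; apply: leq_trans (kprime_le s (pull_free (@lift_inj _ v) hE)) _.
  apply: leq_trans (pull_lift_count v E s) _.
  by apply: subset_leq_card; apply/fintype.subsetP => S; rewrite !inE.
have : \sum_(v : 'I_n.+1) kprime s t n <= \sum_(v : 'I_n.+1) #|[set S in I | v \notin S]|.
  by apply: leq_sum => v _; exact: h1.
rewrite sum_nat_const card_ord => /leq_trans; apply.
have -> : \sum_(v : 'I_n.+1) #|[set S in I | v \notin S]|
          = \sum_(v : 'I_n.+1) \sum_(S in I) (v \notin S : nat).
  apply: eq_bigr => v _; rewrite -sum1_card big_mkcond [RHS]big_mkcond /=.
  by apply: eq_bigr => S _; rewrite [in LHS]inE; case: (S \in I); case: (v \in S).
rewrite exchange_big /=.
have -> : \sum_(S in I) \sum_(v : 'I_n.+1) (v \notin S : nat)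
          = \sum_(S in I) (n.+1 - s).
  apply: eq_bigr => S; rewrite inE => /andP[/eqP hS _].
  have hc : #|~: S| = n.+1 - s by move: (cardsC S); rewrite card_ord hS; lia.
  rewrite -hc -sum1_card [RHS]big_mkcond /=.
  by apply: eq_bigr => v _; rewrite !inE; case: (v \in S).
by rewrite sum_nat_const mulnC.
Qed.

Lemma im_pre (aT rT : finType) (f : aT -> rT) (S : {set rT}) :
  (forall x, x \in S -> exists y, x = f y) -> f @: (f @^-1: S) = S.
Proof.
move=> H; apply/finset.setP => x; apply/imsetP/idP.
  by case=> y; rewrite inE => hy ->.
move=> hx; have [y hy] := H x hx; exists y => //; by rewrite inE -hy.
Qed.

Section Join.
Variables (m k : nat) (E : {set {set 'I_m}}).
Let L := [set x : 'I_(m + k) | x < m].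
Let E' := [set P : {set 'I_(m + k)} |
   (~~ (P \subset L) && ~~ (P \subset ~: L)) ||
   ((P \subset L) && (lshift k @^-1: P \in E))].

Let lsL x : lshift k x \in L.
Proof. by rewrite inE /=. Qed.

Let rsL y : rshift m y \notin L.
Proof. by rewrite inE /= -leqNgt leq_addr. Qed.

Let Lchar x : x \in L -> exists x', x = lshift k x'.
Proof. by rewrite inE => hx; exists (Ordinal hx); apply: val_inj. Qed.

Let Rchar x : x \notin L -> exists y, x = rshift m y.
Proof.
rewrite inE -leqNgt => hx.
have h : x - m < k by have := ltn_ord x; lia.
by exists (Ordinal h); apply: val_inj => /=; rewrite subnKC.
Qed.

Let pairL x y : ([set lshift k x; lshift k y] \in E') = ([set x; y] \in E).
Proof.
have hsub : [set lshift k x; lshift k y] \subset L.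
  by apply/fintype.subsetP => z /set2P[] ->; exact: lsL.
rewrite /E' inE hsub /=.
have -> : lshift k @^-1: [set lshift k x; lshift k y] = [set x; y] => //.
by apply/finset.setP => z; rewrite !inE !(inj_eq (@lshift_inj _ _)).
Qed.

Let pairLR x y : x \in L -> y \notin L -> [set x; y] \in E'.
Proof.
move=> hx hy; rewrite inE; apply/orP; left; apply/andP; split.
  by apply/negP => /fintype.subsetP /(_ y (set22 x y)); rewrite (negbTE hy).
by apply/negP => /fintype.subsetP /(_ x (set21 x y)); rewrite finset.in_setC hx.
Qed.

Let pairRR x y : x \notin L -> y \notin L -> [set x; y] \notin E'.
Proof.
move=> hx hy; rewrite inE negb_or; apply/andP; split.
  rewrite negb_and !negbK; apply/orP; right.
  by apply/fintype.subsetP => z /set2P[] ->; rewrite finset.in_setC ?hx ?hy.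
rewrite negb_and; apply/orP; left.
by apply/negP => /fintype.subsetP /(_ x (set21 x y)); rewrite (negbTE hx).
Qed.

Lemma join_free t : kclique E t = 0 -> kclique E' t.+1 = 0.
Proof.
move=> hE; apply/eqP; rewrite /kclique cards_eq0; apply/eqP; apply/finset.setP => S.
rewrite !inE; apply/negbTE/negP => /andP[/eqP hS cS].
set S0 := lshift k @^-1: S.
have cS0 : is_clique E S0.
  apply/forall_inP => x hx; apply/forall_inP => y hy; apply/implyP => hxy.
  rewrite inE in hx; rewrite inE in hy.
  have hne : lshift k x != lshift k y by rewrite (inj_eq (@lshift_inj _ _)).
  by move/forall_inP/(_ _ hx)/forall_inP/(_ _ hy): cS; rewrite hne /= pairL.
have hR : #|S :\: L| <= 1.
  rewrite leqNgt; apply/negP => /card_gt1P [x [y [hx hy hxy]]].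
  move: hx hy; rewrite !inE => /andP[hxL hxS] /andP[hyL hyS].
  move/forall_inP/(_ _ hxS)/forall_inP/(_ _ hyS): cS; rewrite hxy /=.
  by apply/negP; apply: pairRR; rewrite inE.
have hL : #|S :&: L| = #|S0|.
  suff -> : S :&: L = lshift k @: S0 by rewrite card_imset //; exact: lshift_inj.
  apply/finset.setP => x; rewrite inE; apply/andP/imsetP.
    by case=> hxS /Lchar [x' ex]; exists x' => //; rewrite /S0 inE -ex.
  by case=> x'; rewrite /S0 inE => hx' ->; split.
have ht : t <= #|S0|.
  by move: (cardsID L S); rewrite hS -hL => h; rewrite -ltnS -h -addn1 leq_add2l.
have [U [hU hUt]] := has_sub ht.
by move: (kclique0 hE hUt); rewrite (clique_sub hU cS0).
Qed.

Lemma join_count s :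
  kindep E' s <= kindep E s + 'C(k, s).
Proof.
set A1 := [set lshift k @: S0 | S0 : {set 'I_m} in [set S0 : {set 'I_m} | (#|S0| == s) && is_indep E S0]].
set A2 := [set @rshift m k @: S0 | S0 : {set 'I_k} in [set S0 : {set 'I_k} | #|S0| == s]].
have sub : [set S : {set 'I_(m + k)} | (#|S| == s) && is_indep E' S] \subset A1 :|: A2.
  apply/fintype.subsetP => S; rewrite inE => /andP[/eqP hS iS].
  rewrite inE; case: (boolP (S \subset L)) => hSL.
    apply/orP; left; apply/imsetP; exists (lshift k @^-1: S); last first.
      by rewrite im_pre // => x hx; apply: Lchar; exact: (fintype.subsetP hSL).
    have e : lshift k @: (lshift k @^-1: S) = S.
      by rewrite im_pre // => x hx; apply: Lchar; exact: (fintype.subsetP hSL).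
    have hc : #|lshift k @: (lshift k @^-1: S)| = #|lshift k @^-1: S|.
      by rewrite card_imset //; exact: lshift_inj.
    rewrite e in hc; rewrite inE -hc hS eqxx /=.
    apply/forall_inP => x hx; apply/forall_inP => y hy; apply/implyP => hxy.
    rewrite inE in hx; rewrite inE in hy.
    have hne : lshift k x != lshift k y by rewrite (inj_eq (@lshift_inj _ _)).
    by move/forall_inP/(_ _ hx)/forall_inP/(_ _ hy): iS; rewrite hne /= pairL.
  case: (boolP (S \subset ~: L)) => hSR.
    apply/orP; right; apply/imsetP; exists (@rshift m k @^-1: S); last first.
      rewrite im_pre // => x hx; apply: Rchar.
      by move: (fintype.subsetP hSR x hx); rewrite inE.
    have e : @rshift m k @: (@rshift m k @^-1: S) = S.
      rewrite im_pre // => x hx; apply: Rchar.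
      by move: (fintype.subsetP hSR x hx); rewrite inE.
    have hc : #|@rshift m k @: (@rshift m k @^-1: S)| = #|@rshift m k @^-1: S|.
      by rewrite card_imset //; exact: rshift_inj.
    by rewrite e in hc; rewrite inE -hc hS.
  case/subsetPn: hSL => x hxS hxL.
  case/subsetPn: hSR => y hyS; rewrite inE negbK => hyL.
  have hyx : y != x by apply: contraNneq hxL => <-.
  move/forall_inP/(_ _ hyS)/forall_inP/(_ _ hxS): iS; rewrite hyx /=.
  by rewrite (pairLR hyL hxL).
apply: leq_trans (subset_leq_card sub) _.
apply: leq_trans (leq_card_setU A1 A2) _.
apply: leq_add; first exact: leq_imset_card.
apply: leq_trans (leq_imset_card _ _) _.
by rewrite card_draws card_ord.
Qed.

End Join.

Lemma kprime_join s t m k : 2 <= t ->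
  kprime s t.+1 (m + k) <= kprime s t m + 'C(k, s).
Proof.
move=> t2; have [E [hE ->]] := kprime_exists s m t2.
apply: leq_trans (kprime_le s (@join_free m k E t hE)) _.
exact: join_count.
Qed.

End M0.
Import M0.

Module M1.
Import numFieldNormedType.Exports.
Set Implicit Arguments. Unset Strict Implicit. Unset Printing Implicit Defensive.
Local Open Scope nat_scope.

Lemma ffact_ratio m N s : m <= N -> m ^_ s * N ^ s <= N ^_ s * m ^ s.
Proof.
move=> hmN; elim: s => [|s IH]; first by rewrite !ffactn0 !expn0.
rewrite !ffactnSr !expnSr.
have h2 : (m - s) * N <= (N - s) * m by nia.
have := leq_mul IH h2; nia.
Qed.

Lemma bin_ratio m N s : m <= N -> 'C(m, s) * N ^ s <= 'C(N, s) * m ^ s.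
Proof.
move=> hmN; rewrite -(@leq_pmul2r s`!) ?fact_gt0 //.
have := ffact_ratio s hmN; rewrite -!bin_ffact; nia.
Qed.

Local Open Scope ring_scope.

Section Real.
Variable R : realType.

Definition aseq (s t : nat) : nat -> R :=
  fun n => (kprime s t n)%:R / ('C(n, s))%:R.

Lemma aseq_ge0 s t n : 0 <= aseq s t n.
Proof. by rewrite /aseq divr_ge0 // ler0n. Qed.

Lemma aseq_le1 s t n : aseq s t n <= 1.
Proof.
rewrite /aseq; have [->|hC] := eqVneq ('C(n, s)) 0%N; first by rewrite invr0 mulr0.
rewrite ler_pdivrMr ?ltr0n ?lt0n // mul1r ler_nat; exact: kprime_le_C.
Qed.

Lemma aseq_step s t n : (2 <= t)%N -> aseq s t n <= aseq s t n.+1.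
Proof.
move=> t2; rewrite /aseq.
have [h0|hC] := eqVneq ('C(n, s)) 0%N.
  by rewrite h0 invr0 mulr0 divr_ge0 // ler0n.
have hsn : (s <= n)%N by rewrite -bin_gt0 lt0n.
have hC1 : (0 < 'C(n.+1, s))%N by rewrite bin_gt0 (leq_trans hsn).
rewrite ler_pdivrMr ?ltr0n ?lt0n // mulrAC ler_pdivlMr ?ltr0n // -!natrM ler_nat.
rewrite -(@leq_pmul2l (n.+1 - s)); last by rewrite subn_gt0 ltnS.
have h := kprime_avg s n t2.
have hb := mul_bin_down n.+1 s; rewrite /= in hb.
rewrite mulnCA -hb; nia.
Qed.

Lemma aseq_mono s t : (2 <= t)%N -> {homo aseq s t : n m / (n <= m)%N >-> n <= m}.
Proof. by move=> t2; apply/nondecreasing_seqP => n; exact: aseq_step. Qed.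

Lemma aseq_cvg s t : (2 <= t)%N -> cvgn (aseq s t).
Proof.
move=> t2; apply: nondecreasing_is_cvgn; first exact: aseq_mono.
by exists 1 => _ [n _ <-]; exact: aseq_le1.
Qed.

Lemma gstE s t : gst R s t = limn (aseq s t).
Proof. by []. Qed.

Lemma aseq_le_gst s t n : (2 <= t)%N -> aseq s t n <= gst R s t.
Proof. by move=> t2; rewrite gstE; apply: nondecreasing_cvgn_le; [exact: aseq_mono|exact: aseq_cvg]. Qed.

Lemma gst_ge0 s t : (2 <= t)%N -> 0 <= gst R s t.
Proof. by move=> t2; apply: le_trans (aseq_le_gst s 0 t2); exact: aseq_ge0. Qed.

End Real.

End M1.
Import M1.

Module M2.
Import numFieldNormedType.Exports.
Set Implicit Arguments. Unset Strict Implicit. Unset Printing Implicit Defensive.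
Local Open Scope ring_scope.

Section Real2.
Variable R : realType.

Lemma kp_le_g s t m : (2 <= t)%N ->
  (kprime s t m)%:R <= gst R s t * ('C(m, s))%:R.
Proof.
move=> t2; have [h0|hC] := eqVneq ('C(m, s)) 0%N.
  have := kprime_le_C s t m; rewrite h0 leqn0 => /eqP ->.
  by rewrite mulr0.
rewrite -ler_pdivrMr ?ltr0n ?lt0n //. exact: (aseq_le_gst R s m t2).
Qed.

Lemma binr_ratio m N s : (m <= N)%N -> (0 < N)%N -> (0 < 'C(N, s))%N ->
  ('C(m, s))%:R / ('C(N, s))%:R <= ((m%:R / N%:R) ^+ s : R).
Proof.
move=> hmN hN hC; rewrite expr_div_n ler_pdivrMr ?ltr0n // mulrAC.
rewrite ler_pdivlMr ?exprn_gt0 ?ltr0n // -!natrX -!natrM ler_nat.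
by rewrite [X in (_ <= X)%N]mulnC; apply: bin_ratio.
Qed.

Lemma aseq_bound s t N m : (2 <= t)%N -> (m <= N)%N -> (s < N)%N ->
  aseq R s t.+1 N <=
  gst R s t * (m%:R / N%:R) ^+ s + ((N - m)%:R / N%:R) ^+ s.
Proof.
move=> t2 hmN hsN.
have hN : (0 < N)%N by apply: leq_ltn_trans hsN.
have hC : (0 < 'C(N, s))%N by rewrite bin_gt0 ltnW.
have hj := @kprime_join s t m (N - m) t2; rewrite subnKC // in hj.
rewrite /aseq ler_pdivrMr ?ltr0n //.
apply: le_trans (_ : ((kprime s t m)%:R + ('C(N - m, s))%:R) <= _).
  by rewrite -natrD ler_nat.
rewrite mulrDl; apply: lerD.
  rewrite -ler_pdivrMr ?ltr0n //.
  apply: le_trans (_ : gst R s t * (('C(m, s))%:R / ('C(N, s))%:R) <= _).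
    by rewrite mulrA ler_pM2r ?invr_gt0 ?ltr0n // kp_le_g.
  by apply: ler_wpM2l; [exact: gst_ge0 | exact: binr_ratio].
rewrite -ler_pdivrMr ?ltr0n //; apply: binr_ratio => //; exact: leq_subr.
Qed.

End Real2.

End M2.
Import M2.

Module M3.
Import numFieldNormedType.Exports.
Set Implicit Arguments. Unset Strict Implicit. Unset Printing Implicit Defensive.
Local Open Scope classical_set_scope.
Local Open Scope ring_scope.

Section Real3.
Variable R : realType.

Lemma KI s t (a : R) : (2 <= t)%N -> 0 <= a -> a <= 1 ->
  gst R s t.+1 <= gst R s t * a ^+ s + (1 - a) ^+ s.
Proof.
move=> t2 a0 a1.
set g := gst R s t.
pose b := fun N : nat => g * a ^+ s + (1 - a + 2 * harmonic N) ^+ s.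
have bcvg : b @ \oo --> g * a ^+ s + (1 - a) ^+ s.
  apply: cvgD; first exact: cvg_cst.
  have h1 : (fun N : nat => 1 - a + 2 * harmonic N) @ \oo --> 1 - a.
    rewrite -[X in _ --> X]addr0; apply: cvgD; first exact: cvg_cst.
    rewrite -(mulr0 (2 : R)); apply: cvgMl_tmp; exact: cvg_harmonic.
  exact: (continuous_cvg _ (@exprn_continuous R s _) h1).
have hlim : lim (b @ \oo) = g * a ^+ s + (1 - a) ^+ s by apply/cvg_lim.
rewrite gstE -hlim; apply: ler_lim; [by apply: aseq_cvg; apply: leqW | exact: (cvgP _ bcvg) |].
exists s.+1 => // N /= hN.
have N0 : (0 < N)%N by apply: leq_ltn_trans hN.
have N0r : 0 < (N%:R : R) by rewrite ltr0n.
set m := Num.truncn (a * N%:R).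
have aN0 : 0 <= a * N%:R by rewrite mulr_ge0 // ler0n.
have /andP[hm1 hm2] := truncn_itv aN0; rewrite -/m in hm1 hm2.
have hmN : (m <= N)%N.
  rewrite -(ler_nat R); apply: le_trans hm1 _.
  by rewrite ler_piMl // ler0n.
apply: le_trans (aseq_bound R (leq_trans _ t2) hmN hN) _ => //.
rewrite /b; apply: lerD.
  apply: ler_wpM2l; first exact: gst_ge0.
  apply: lerXn2r; rewrite ?nnegrE ?divr_ge0 ?ler0n //.
  by rewrite ler_pdivrMr // mulrC.
apply: lerXn2r; rewrite ?nnegrE ?divr_ge0 ?ler0n //.
  by have := @harmonic_ge0 R N; lra.
rewrite ler_pdivrMr // natrB //.
have hh : (1 : R) <= 2 * harmonic N * N%:R.
  have -> : 2 * harmonic N * N%:R = (2 * N%:R) / N.+1%:R :> R by rewrite /harmonic /=; ring.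
  rewrite ler_pdivlMr ?ltr0n // mul1r -[2]/(2%:R) -natrM ler_nat; lia.
rewrite -natr1 in hm2.
have -> : (1 - a + 2 * harmonic N) * N%:R = N%:R - a * N%:R + 2 * harmonic N * N%:R by ring.
lra.
Qed.
End Real3.

End M3.
Import M3.

Module M4.
Import numFieldNormedType.Exports.
Set Implicit Arguments. Unset Strict Implicit. Unset Printing Implicit Defensive.
Local Open Scope ring_scope.

Section Real4.
Variable R : realType.

Lemma powR_e_mul (s : nat) (d : R) : (1 <= s)%N -> 0 <= d ->
  powR d (1 - s%:R) * d ^+ s = d.
Proof.
move=> s1 d0; have [->|dn0] := eqVneq d 0.
  by rewrite expr0n; case: s s1 => // s _; rewrite mulr0.
rewrite -powR_mulrn // -powRD; last by apply/implyP.
by rewrite subrK powRr1.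
Qed.

Lemma powR_e_div (s : nat) (x : R) : 0 < x ->
  powR x (1 - s%:R) = x / x ^+ s.
Proof.
move=> x0; rewrite powRD; last by apply/implyP => _; rewrite gt_eqF.
by rewrite powRr1 ?ltW // powRN powR_mulrn ?ltW.
Qed.

Lemma step_ident (s : nat) (d : R) : (1 <= s)%N -> 0 <= d ->
  powR d (1 - s%:R) * (d / (1 + d)) ^+ s + (1 - d / (1 + d)) ^+ s
  = powR (d + 1) (1 - s%:R).
Proof.
move=> s1 d0.
have d1 : 0 < 1 + d by rewrite ltr_pwDl.
have -> : 1 - d / (1 + d) = 1 / (1 + d).
  by rewrite -{1}(divff (lt0r_neq0 d1)) -mulrBl addrK.
rewrite !expr_div_n expr1n mulrA powR_e_mul // [d + 1]addrC powR_e_div //.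
by rewrite -mulrDl addrC.
Qed.

Lemma gst_step s t (d : R) : (2 <= t)%N -> (1 <= s)%N -> 0 <= d ->
  gst R s t <= powR d (1 - s%:R) -> gst R s t.+1 <= powR (d + 1) (1 - s%:R).
Proof.
move=> t2 s1 d0 hg.
have d1 : 0 < 1 + d by lra.
have a0 : 0 <= d / (1 + d) by rewrite divr_ge0 // ltW.
have a1 : d / (1 + d) <= 1 by rewrite ler_pdivrMr // mul1r; lra.
apply: le_trans (KI s t2 a0 a1) _.
rewrite -step_ident // lerD2r ler_wpM2r // exprn_ge0 //.
Qed.

Lemma gst_mono s t : (2 <= t)%N -> (1 <= s)%N -> gst R s t.+1 <= gst R s t.
Proof.
move=> t2 s1; have := KI s t2 (@ler01 R) (lexx 1).
by rewrite subrr expr1n mulr1 expr0n; case: s s1 => // s _; rewrite addr0.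
Qed.

End Real4.

End M4.
Import M4.

Module M5.
Import numFieldNormedType.Exports.
Local Open Scope ring_scope.

Lemma powR_anti_lt (R : realType) s (x y : R) : (2 <= s)%N -> 0 < x -> x < y ->
  powR y (1 - s%:R) < powR x (1 - s%:R).
Proof.
move=> s2 x0 xy.
have y0 : 0 < y by apply: lt_trans xy.
have -> : 1 - s%:R = - (s.-1)%:R :> R.
  by case: s s2 => // s' _; rewrite /= -natr1; lra.
rewrite !powRN !powR_mulrn ?ltW // ltf_pV2 ?posrE ?exprn_gt0 // ltrXn2r ?ltW //.
by case: s s2 => [|[|]].
Qed.

Lemma powR_anti_le (R : realType) s (x y : R) : (2 <= s)%N -> 0 < x -> x <= y ->
  powR y (1 - s%:R) <= powR x (1 - s%:R).
Proof.
move=> s2 x0; rewrite le_eqVlt => /orP[/eqP -> //|xy].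
exact/ltW/powR_anti_lt.
Qed.

Lemma base_eq (R : realType) (g e : R) : e != 0 -> 0 <= g ->
  g = powR (powR g (1 / e)) e.
Proof.
move=> e0 g0; have [->|gn0] := eqVneq g 0.
  by rewrite powR0 ?powR0 // div1r invr_eq0.
by rewrite -powRrM div1r mulVf // powRr1.
Qed.


End M5.
Import M5.

Unset Implicit Arguments.
Set Strict Implicit.
Local Open Scope ring_scope.

Theorem proposition5p1 (R : realType) (s t0 : nat) :
  (2 <= s)%N -> (2 <= t0)%N ->
  (forall t : nat, (t0 <= t)%N ->
     gst R s t <=
       powR ((t%:R - t0%:R) + powR (gst R s t0) (1 / (1 - s%:R))) (1 - s%:R))
  /\
  (gst R s t0 < powR (t0%:R - 1) (1 - s%:R) ->
     forall t : nat, (t0 <= t)%N -> gst R s t < powR (t%:R - 1) (1 - s%:R)).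
Proof.
move=> s2 t02.
have s1 : (1 <= s)%N by apply: ltnW.
have e0 : 1 - s%:R != 0 :> R.
  have : (1 : R) < s%:R by rewrite ltr1n.
  by rewrite subr_eq0 eq_sym => h; rewrite gt_eqF.
have g00 : 0 <= gst R s t0 by exact: gst_ge0.
have base := @base_eq R _ _ e0 g00.
have c00 : 0 <= powR (gst R s t0) (1 / (1 - s%:R)) by exact: powR_ge0.
have P1 : forall k, gst R s (t0 + k) <=
    powR (k%:R + powR (gst R s t0) (1 / (1 - s%:R))) (1 - s%:R).
  elim => [|k IH]; first by rewrite addn0 add0r -base.
  have t2 : (2 <= t0 + k)%N by apply: leq_trans t02 (leq_addr k t0).
  have d0 : 0 <= k%:R + powR (gst R s t0) (1 / (1 - s%:R)) by rewrite addr_ge0.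
  rewrite addnS; have := gst_step t2 s1 d0 IH.
  by rewrite -natr1 addrAC.
have mono : forall k, gst R s (t0 + k) <= gst R s t0.
  elim => [|k IH]; first by rewrite addn0.
  have t2 : (2 <= t0 + k)%N by apply: leq_trans t02 (leq_addr k t0).
  by rewrite addnS; exact: (le_trans (gst_mono R t2 s1) IH).
split.
  move=> t ht; have -> : t = (t0 + (t - t0))%N by rewrite subnKC.
  by rewrite natrD [t0%:R + _]addrC addrK.
move=> hlt t ht; have -> : t = (t0 + (t - t0))%N by rewrite subnKC.
set k := (t - t0)%N.
have tk : 0 < (t0 + k)%:R - 1 :> R.
  rewrite subr_gt0 ltr1n; apply: leq_trans t02 (leq_addr k t0).
move: g00; rewrite le_eqVlt => /orP[/eqP gz|gp].
  by apply: le_lt_trans (mono k) _; rewrite -gz powR_gt0.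
set c0 := powR (gst R s t0) (1 / (1 - s%:R)) in base P1 c00 *.
have c0p : 0 < c0 by rewrite /c0 powR_gt0.
have ct : t0%:R - 1 < c0.
  rewrite ltNge; apply/negP => hc.
  have := @powR_anti_le R s _ _ s2 c0p hc; rewrite -base => h.
  by move: (lt_le_trans hlt h); rewrite ltxx.
apply: le_lt_trans (P1 k) _; apply: (@powR_anti_lt R s) => //.
rewrite natrD; lra.
Qed.
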